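(* Let $P=\{x\in\mathbb R^n : Ax=b,\ Bx\le d\}$ with $A\in\mathbb R^{m_A\times n}$, $B\in\mathbb R^{m_B\times n}$ be a pointed polyhedron. Then the cone $$C_{A,B}=\{(x,y^+,y^-)\in\mathbb R^{n+2m_B} : Ax=0,\ Bx=y^+-y^-,\ y^+,y^-\ge 0\}$$ is pointed and is generated by a set of extreme rays $S\cup T'$, where: (1) $S:=\{(g,y^+,y^-) : g\in\mathcal C(A,B),\ y^+_i=\max\{(Bg)_i,0\},\ y^-_i=\max\{-(Bg)_i,0\}\ \text{for } i\le m_B\}$ (these give the circuits of $P$); (2) $T'$ is a subset of $T:=\{(0,y^+,y^-) : \text{for some } i\le m_B,\ y^+_i=y^-_i=1 \text{ and } y^+_j=y^-_j=0 \text{ for } j\ne i\}$ with $|T'|\le m_B$. That is, the extreme rays of $C_{A,B}$ are exactly the rays spanned by the elements of $S\cup T'$.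
   Context: $P$ is pointed means $\operatorname{rank}\binom{A}{B}=n$. The set of circuits $\mathcal C(A,B)$ of $P$ consists of all $g\in\ker(A)\setminus\{0\}$ normalized to coprime integer components for which $Bg$ is support-minimal over $\{Bx : x\in\ker(A)\setminus\{0\}\}$, i.e. no $x\in\ker(A)\setminus\{0\}$ satisfies $\operatorname{supp}(Bx)\subsetneq\operatorname{supp}(Bg)$. *)

(* Defs.v *)
From HB Require Import structures.
From mathcomp Require Import all_boot all_order all_algebra.
From mathcomp Require Import reals.
Set Implicit Arguments. Unset Strict Implicit. Unset Printing Implicit Defensive.
Import Order.TTheory GRing.Theory Num.Theory.
Local Open Scope ring_scope.

Section Defs.
Variable R : realType.

Definition supp m (v : 'cV[R]_m) : {set 'I_m} := [set i | v i 0 != 0].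

Definition ratmx m k (M : 'M[rat]_(m, k)) : 'M[R]_(m, k) := map_mx (@ratr R) M.
Definition intcv k (g : 'cV[int]_k) : 'cV[R]_k := map_mx (fun z : int => z%:~R) g.

Definition pointed_poly mA mB n (A : 'M[R]_(mA, n)) (B : 'M[R]_(mB, n)) : Prop :=
  \rank (col_mx A B) = n.

Definition circuit mA mB n (A : 'M[R]_(mA, n)) (B : 'M[R]_(mB, n))
    (g : 'cV[int]_n) : Prop :=
  [/\ g != 0,
      A *m intcv g = 0,
      (\big[gcdn/0%N]_(i < n) `|g i ord0|%N = 1)%N &
      ~ exists x : 'cV[R]_n,
          [/\ x != 0, A *m x = 0 & supp (B *m x) \proper supp (B *m intcv g)]].

Definition xpart n mB (z : 'cV[R]_(n + (mB + mB))) : 'cV[R]_n := usubmx z.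
Definition yppart n mB (z : 'cV[R]_(n + (mB + mB))) : 'cV[R]_mB := usubmx (dsubmx z).
Definition ympart n mB (z : 'cV[R]_(n + (mB + mB))) : 'cV[R]_mB := dsubmx (dsubmx z).
Definition triple n mB (x : 'cV[R]_n) (yp ym : 'cV[R]_mB) : 'cV[R]_(n + (mB + mB)) :=
  col_mx x (col_mx yp ym).

Definition coneC mA mB n (A : 'M[R]_(mA, n)) (B : 'M[R]_(mB, n))
    (z : 'cV[R]_(n + (mB + mB))) : Prop :=
  [/\ A *m xpart z = 0,
      B *m xpart z = yppart z - ympart z &
      forall i, 0 <= yppart z i 0 /\ 0 <= ympart z i 0].

Definition pointed_cone N (C : 'cV[R]_N -> Prop) : Prop :=
  forall z, C z -> C (- z) -> z = 0.

Definition extreme_ray N (C : 'cV[R]_N -> Prop) (r : 'cV[R]_N) : Prop :=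
  [/\ r != 0, C r &
      forall u v, C u -> C v -> r = u + v -> exists a : R, 0 <= a /\ u = a *: r].

Definition generates N (G C : 'cV[R]_N -> Prop) : Prop :=
  forall z, C z <-> exists (k : nat) (c : 'I_k -> R) (p : 'I_k -> 'cV[R]_N),
    (forall j, 0 <= c j /\ G (p j)) /\ z = \sum_(j < k) c j *: p j.

Definition Sset mA mB n (A : 'M[R]_(mA, n)) (B : 'M[R]_(mB, n))
    (z : 'cV[R]_(n + (mB + mB))) : Prop :=
  exists g : 'cV[int]_n, circuit A B g /\
    z = triple (intcv g)
               (\col_i Num.max ((B *m intcv g) i 0) 0)
               (\col_i Num.max (- (B *m intcv g) i 0) 0).

Definition Telem n mB (i : 'I_mB) : 'cV[R]_(n + (mB + mB)) :=
  triple 0 (\col_j (j == i)%:R) (\col_j (j == i)%:R).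

End Defs.

(* Main.v *)
Require Import Defs.
From HB Require Import structures.
From mathcomp Require Import all_boot all_order all_algebra.
From mathcomp Require Import reals.
From mathcomp Require Import ring lra zify boolp.
From Stdlib Require Import Classical.
Import Order.TTheory GRing.Theory Num.Theory.
Local Open Scope ring_scope.
Definition Cone (R : realType) N (G : 'cV[R]_N -> Prop) z :=
  exists (k : nat) (c : 'I_k -> R) (p : 'I_k -> 'cV[R]_N),
    (forall j, 0 <= c j /\ G (p j)) /\ z = \sum_(j < k) c j *: p j.
Arguments Cone [R N] G z.

Section ConeT.
Variables (R : realType) (N : nat) (G : 'cV[R]_N -> Prop).

Lemma Cone0 : Cone G 0.
Proof. by exists 0%N, (fun _ => 0), (fun _ => 0); split => [[]//|]; rewrite big_ord0. Qed.

Lemma ConeG p : G p -> Cone G p.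
Proof.
move=> gp; exists 1%N, (fun _ => 1), (fun _ => p); split => //.
by rewrite big_ord1 scale1r.
Qed.

Lemma ConeZ a z : 0 <= a -> Cone G z -> Cone G (a *: z).
Proof.
move=> a0 [k [c [p [h ->]]]]; exists k, (fun j => a * c j), p; split.
  by move=> j; have [c0 g] := h j; split => //; apply: mulr_ge0.
by rewrite scaler_sumr; apply: eq_bigr => j _; rewrite scalerA.
Qed.

Lemma ConeD z1 z2 : Cone G z1 -> Cone G z2 -> Cone G (z1 + z2).
Proof.
move=> [k1 [c1 [p1 [h1 ->]]]] [k2 [c2 [p2 [h2 ->]]]].
exists (k1 + k2)%N, (fun i => match split i with inl j => c1 j | inr j => c2 j end),
  (fun i => match split i with inl j => p1 j | inr j => p2 j end); split.
  by move=> i; case: (split i) => j; [exact: h1|exact: h2].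
rewrite big_split_ord /=; congr (_ + _); apply: eq_bigr => j _.
  by rewrite (unsplitK (inl j)).
by rewrite (unsplitK (inr j)).
Qed.

Lemma Cone_sum m (F : 'I_m -> 'cV[R]_N) : (forall i, Cone G (F i)) -> Cone G (\sum_i F i).
Proof.
move=> h; apply: (big_ind (Cone G)); [exact: Cone0|exact: ConeD|by move=> i _; apply: h].
Qed.
End ConeT.
Section Scal.
Variable R : realType.
Lemma maxE0 (x : R) : Num.max x 0 = (if 0 <= x then x else 0).
Proof. by case: (lerP 0 x). Qed.

Lemma maxpn (x : R) : Num.max x 0 - Num.max (- x) 0 = x.
Proof. rewrite !maxE0 oppr_ge0; case: (lerP 0 x) => h; case: (lerP x 0) => h'; lra. Qed.

Lemma max_ge0 (x : R) : 0 <= Num.max x 0.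
Proof. by rewrite maxE0; case: (lerP 0 x). Qed.

Lemma maxZ (a x : R) : 0 <= a -> Num.max (a * x) 0 = a * Num.max x 0.
Proof.
move=> ha; rewrite !maxE0; case: (lerP 0 x) => h; case: (lerP 0 (a * x)) => h'; try nra.
Qed.

Lemma maxD (a b s : R) : 0 <= a * s -> (s = 0 -> a = 0) -> 0 <= b * s -> (s = 0 -> b = 0) ->
  s = a + b -> Num.max s 0 = Num.max a 0 + Num.max b 0.
Proof.
move=> h1 h2 h3 h4 e.
have [s0|s0] := eqVneq s 0; first by rewrite (h2 s0) (h4 s0) s0 !maxE0 lexx addr0.
rewrite !maxE0; move: s0; rewrite neq_lt => /orP[] hs;
case: (lerP 0 a) => ha; case: (lerP 0 b) => hb; case: (lerP 0 s) => hs'; nra.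
Qed.
End Scal.
Lemma rank_inj (F : fieldType) m k (M : 'M[F]_(m, k)) (x : 'cV[F]_k) :
  \rank M = k -> M *m x = 0 -> x = 0.
Proof.
move=> hr hx; apply: trmx_inj; rewrite trmx0; apply/eqP.
rewrite -(@mulmx_free_eq0 _ _ _ _ _ M^T); last by rewrite /row_free mxrank_tr hr.
by rewrite -trmx_mul hx trmx0.
Qed.

Lemma ker_nz (F : fieldType) m k (M : 'M[F]_(m, k)) :
  (\rank M < k)%N -> exists q : 'cV[F]_k, q != 0 /\ M *m q = 0.
Proof.
move=> hr; set K := kermx M^T.
have K0 : K != 0 by rewrite -mxrank_eq0 mxrank_ker mxrank_tr subn_eq0 -ltnNge.
have [i hi] : exists i, row i K != 0.
  apply: NNPP => h; move/eqP: K0; apply; apply/row_matrixP => i; rewrite row0.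
  by apply/eqP; apply: negbNE; apply/negP => hi; apply: h; exists i.
exists (row i K)^T; split; first by rewrite trmx_eq0.
by apply: trmx_inj; rewrite trmx_mul trmxK trmx0 -row_mul mulmx_ker row0.
Qed.

Lemma int_scale k (q : 'cV[rat]_k) : q != 0 ->
  exists (g : 'cV[int]_k) (c : rat), [/\ c != 0, (forall i, q i ord0 = c * (g i ord0)%:~R)
    & (\big[gcdn/0]_(i < k) `|g i ord0|)%N = 1%N].
Proof.
move=> q0.
set D : int := \prod_(j < k) denq (q j ord0).
set h : 'I_k -> int := fun i => numq (q i ord0) * \prod_(j < k | j != i) denq (q j ord0).
have hD : forall i, (h i)%:~R = q i ord0 * D%:~R :> rat.
  move=> i; rewrite /h /D [in RHS](bigD1 i) //= !intrM numqE mulrA //.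
have Dp : 0 < D by apply: prodr_gt0 => j _; exact: denq_gt0.
have D0 : (D%:~R : rat) != 0 by rewrite intr_eq0 gt_eqF.
have [i0 [j0 hi0]] := matrix0Pn _ q0.
rewrite (ord1 j0) in hi0.
have h0 : h i0 != 0 by rewrite -(intr_eq0 rat) hD mulf_neq0.
set d := (\big[gcdn/0]_(i < k) `|h i|)%N.
have dv : forall i, (d %| `|h i|)%N by move=> i; rewrite /d (bigD1 i) //= dvdn_gcdl.
have dp : (0 < d)%N.
  rewrite lt0n; apply/negP => /eqP d0; move: (dv i0); rewrite d0 dvd0n absz_eq0.
  by rewrite (negbTE h0).
set g : 'cV[int]_k := \col_i ((h i) %/ (d%:Z))%Z.
have hg : forall i, h i = g i ord0 * d%:Z.
  by move=> i; rewrite mxE divzK // dvdzE absz_nat.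
exists g, (d%:~R / D%:~R); split.
- by rewrite mulf_neq0 ?invr_eq0 // intr_eq0 -lt0n.
- move=> i; apply: (mulIf D0); rewrite -hD hg intrM; field; exact: D0.
- have e : (\big[gcdn/0]_(i < k) `|g i ord0| * d = d)%N.
    rewrite (big_morph (fun a => a * d)%N (fun a b => muln_gcdl a b d) (mul0n d)).
    by rewrite /d; apply: eq_bigr => i _; rewrite hg abszM absz_nat.
  by apply/eqP; rewrite -(eqn_pmul2r dp) mul1n e.
Qed.
Section Gen.
Variables (R : realType) (mA mB n : nat) (A : 'M[R]_(mA,n)) (B : 'M[R]_(mB,n)).
Hypothesis hk : forall x : 'cV[R]_n, A *m x = 0 -> B *m x = 0 -> x = 0.

Definition conf (u w : 'cV[R]_mB) :=
  forall i, 0 <= u i 0 * w i 0 /\ (w i 0 = 0 -> u i 0 = 0).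

Lemma conf_refl w : conf w w.
Proof. by move=> i; split => //; rewrite -expr2 sqr_ge0. Qed.

Lemma conf_trans u v w : conf u v -> conf v w -> conf u w.
Proof.
move=> h1 h2 i; have [a1 b1] := h1 i; have [a2 b2] := h2 i.
split; last by move=> /b2 /b1.
have [->|u0] := eqVneq (u i 0) 0; first by rewrite mul0r.
have v0 : v i 0 != 0 by apply: contra u0 => /eqP /b1 ->.
have : 0 < v i 0 ^+ 2 by rewrite exprn_even_gt0.
nra.
Qed.

Lemma conf_supp u w : conf u w -> supp u \subset supp w.
Proof.
move=> h; apply/subsetP => i; rewrite !inE; apply: contra => /eqP /(proj2 (h i)) ->.
by [].
Qed.

Lemma ratio_min (w v : 'cV[R]_mB) i0 : 0 < w i0 0 / v i0 0 ->
  exists j, 0 < w j 0 / v j 0 /\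
    forall i, 0 < w i 0 / v i 0 -> w j 0 / v j 0 <= w i 0 / v i 0.
Proof.
move=> h0.
case: (@arg_minP _ _ _ i0 (fun i => 0 < w i 0 / v i 0) (fun i => w i 0 / v i 0) h0).
move=> j Pj hj; exists j; split => // i Pi; exact: hj.
Qed.

Lemma shrink (w v : 'cV[R]_mB) j :
  (forall i, w i 0 = 0 -> v i 0 = 0) ->
  0 < w j 0 / v j 0 ->
  (forall i, 0 < w i 0 / v i 0 -> w j 0 / v j 0 <= w i 0 / v i 0) ->
  conf (w - (w j 0 / v j 0) *: v) w /\ (w - (w j 0 / v j 0) *: v) j 0 = 0.
Proof.
move=> hs hp hm; set t := w j 0 / v j 0.
have vj : v j 0 != 0 by apply: contraTneq hp => ->; rewrite invr0 mulr0 ltxx.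
split; last by rewrite !mxE /t divfK // subrr.
move=> i; rewrite !mxE; split; last by move=> h; rewrite h (hs _ h) mulr0 subrr.
have [v0|vi] := eqVneq (v i 0) 0; first by rewrite v0 mulr0 subr0 -expr2 sqr_ge0.
set r := w i 0 / v i 0.
have wr : w i 0 = r * v i 0 by rewrite /r divfK.
rewrite wr.
have : 0 <= v i 0 ^+ 2 by rewrite sqr_ge0.
have [rp|rn] := ltP 0 r.
  have := hm i rp; rewrite -/t -/r => htr; nra.
have ht : 0 < t by [].
have h1 : 0 <= r * (r - t) by nra.
have -> : (r * v i 0 - t * v i 0) * (r * v i 0) = r * (r - t) * v i 0 ^+ 2 by ring.
by move=> h2; apply: mulr_ge0.
Qed.
Arguments ratio_min [w v i0].
Arguments shrink [w v j].
Arguments conf_supp [u w].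
Arguments conf_trans [u v w].
Lemma cvB m (u v : 'cV[R]_m) i : (u - v) i 0 = u i 0 - v i 0.
Proof. by rewrite !mxE. Qed.
Lemma cvD m (u v : 'cV[R]_m) i : (u + v) i 0 = u i 0 + v i 0.
Proof. by rewrite !mxE. Qed.
Lemma cvZ m c (u : 'cV[R]_m) i : (c *: u) i 0 = c * u i 0.
Proof. by rewrite !mxE. Qed.
Lemma cvN m (u : 'cV[R]_m) i : (- u) i 0 = - u i 0.
Proof. by rewrite !mxE. Qed.

Lemma suppE m (u : 'cV[R]_m) i : (i \in supp u) = (u i 0 != 0).
Proof. by rewrite inE. Qed.

Lemma supp_scale m (c : R) (u : 'cV[R]_m) : c != 0 -> supp (c *: u) = supp u.
Proof. by move=> c0; apply/setP => i; rewrite !suppE mxE mulf_eq0 negb_or c0. Qed.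

Lemma cv_neq0 m (u : 'cV[R]_m) : u != 0 -> exists i, u i 0 != 0.
Proof.
move=> u0; apply: NNPP => h; move/eqP: u0; apply; apply/matrixP => i j.
rewrite ord1 !mxE; apply/eqP/negPn/negP => hi; apply: h; by exists i.
Qed.
Arguments cv_neq0 [m u].

Lemma Bx_neq0 (x : 'cV[R]_n) : x != 0 -> A *m x = 0 -> B *m x != 0.
Proof. move=> x0 ax; apply: contra x0 => /eqP bx; apply/eqP; exact: hk. Qed.
Arguments Bx_neq0 [x].

Definition elem (x : 'cV[R]_n) := [/\ x != 0, A *m x = 0 &
  ~ exists y : 'cV[R]_n, [/\ y != 0, A *m y = 0 & supp (B *m y) \proper supp (B *m x)]].

Lemma elem_prop (y x : 'cV[R]_n) : elem y -> A *m x = 0 -> supp (B *m x) \subset supp (B *m y) ->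
  exists l : R, x = l *: y.
Proof.
case=> y0 ay hy ax hs.
have [i0 hi0] := cv_neq0 (Bx_neq0 y0 ay).
set l := (B *m x) i0 0 / (B *m y) i0 0.
exists l; apply/eqP; rewrite -subr_eq0; apply/negP => /negP z0.
apply: hy; exists (x - l *: y); split => //.
  by rewrite mulmxBr -scalemxAr ax ay scaler0 subrr.
apply/properP; split.
  apply/subsetP => i; rewrite mulmxBr -scalemxAr !suppE cvB cvZ.
  have [bx0|bx] := eqVneq ((B *m x) i 0) 0.
    by rewrite bx0 sub0r oppr_eq0 mulf_eq0 negb_or => /andP[].
  by move=> _; move: (subsetP hs i); rewrite !suppE; apply.
exists i0; first by rewrite suppE.
by rewrite suppE mulmxBr -scalemxAr cvB cvZ /l divfK // subrr eqxx.
Qed.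

Lemma elem_conf k (x : 'cV[R]_n) : (#|supp (B *m x)| <= k)%N -> x != 0 -> A *m x = 0 ->
  exists y, elem y /\ conf (B *m y) (B *m x).
Proof.
elim: k x => [|k IH] x hc x0 ax; (case: (classic (elem x)) => [he|hne];
  first by exists x; split => //; exact: conf_refl);
  (have [v [v0 av hp]] : exists v, [/\ v != 0, A *m v = 0 &
     supp (B *m v) \proper supp (B *m x)] by apply: NNPP => h; apply: hne; split).
  by move: (proper_card hp); rewrite ltnNge (leq_trans hc).
set w := B *m x.
have [i0 hi0] := cv_neq0 (Bx_neq0 v0 av).
have wi0 : w i0 0 != 0.
  by move: (hp) => /properP [/subsetP /(_ i0) h _]; move: h; rewrite !suppE; apply.
have [v' [av' sv' pv']] : exists v', [/\ A *m v' = 0, supp (B *m v') = supp (B *m v)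
   & 0 < w i0 0 / (B *m v') i0 0].
  have [rp|rn] := ltP 0 (w i0 0 / (B *m v) i0 0); first by exists v.
  exists (- v); rewrite mulmxN av oppr0 mulmxN -scaleN1r supp_scale ?oppr_eq0 ?oner_eq0 //.
  split => //; rewrite cvZ mulN1r invrN mulrN oppr_gt0 lt_neqAle rn andbT.
  by rewrite mulf_eq0 negb_or wi0 invr_eq0.
have [j [pj mj]] := ratio_min pv'.
have hs : forall i, w i 0 = 0 -> (B *m v') i 0 = 0.
  move=> i wi; apply/eqP; rewrite -[_ == 0]negbK -suppE sv'; apply/negP => hi.
  move: (hp) => /properP [/subsetP /(_ i hi) h _]; move: h; rewrite suppE wi eqxx //.
have [hcf hj] := shrink hs pj mj.
set t := w j 0 / (B *m v') j 0 in hcf hj.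
set x' := x - t *: v'.
have bx' : B *m x' = w - t *: (B *m v') by rewrite /x' mulmxBr -scalemxAr.
have wj : w j 0 != 0 by apply: contraTneq pj => ->; rewrite mul0r ltxx.
have hp' : supp (B *m x') \proper supp w.
  apply/properP; split; first by rewrite bx'; exact: conf_supp.
  by exists j; rewrite !suppE // bx' hj eqxx.
have x'0 : x' != 0.
  move: (hp) => /properP [_ [k0 hk0 nk0]].
  apply: contraTneq hk0 => ex'.
  have : (B *m x') k0 0 = 0 by rewrite ex' mulmx0 mxE.
  rewrite bx' cvB cvZ; move: nk0; rewrite -sv' suppE negbK => /eqP ->.
  by rewrite mulr0 subr0 suppE => ->; rewrite eqxx.
have ax' : A *m x' = 0 by rewrite /x' mulmxBr -scalemxAr ax av' scaler0 subrr.
have [y [ey cy]] := IH x' (leq_trans (proper_card hp') hc) x'0 ax'.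
exists y; split => //; apply: conf_trans cy _; rewrite bx'; exact: hcf.
Qed.
Lemma triple_eta (z : 'cV[R]_(n + (mB + mB))) : z = triple (xpart z) (yppart z) (ympart z).
Proof. by rewrite /triple /xpart /yppart /ympart !vsubmxK. Qed.

Lemma triple_inj (x x' : 'cV[R]_n) (p q p' q' : 'cV[R]_mB) :
  triple x p q = triple x' p' q' -> [/\ x = x', p = p' & q = q'].
Proof. by move=> /eq_col_mx [-> /eq_col_mx [-> ->]]. Qed.

Lemma tripleD (x x' : 'cV[R]_n) (p q p' q' : 'cV[R]_mB) :
  triple x p q + triple x' p' q' = triple (x + x') (p + p') (q + q').
Proof. by rewrite /triple !add_col_mx. Qed.

Lemma tripleZ a (x : 'cV[R]_n) (p q : 'cV[R]_mB) :
  a *: triple x p q = triple (a *: x) (a *: p) (a *: q).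
Proof. by rewrite /triple !scale_col_mx. Qed.

Lemma triple0 : triple 0 0 0 = 0 :> 'cV[R]_(n + (mB + mB)).
Proof. by rewrite /triple !col_mx0. Qed.

Lemma coneCE (x : 'cV[R]_n) (p q : 'cV[R]_mB) : coneC A B (triple x p q) <->
  [/\ A *m x = 0, B *m x = p - q & forall i, 0 <= p i 0 /\ 0 <= q i 0].
Proof. rewrite /coneC /xpart /yppart /ympart /triple !(col_mxKu, col_mxKd); by split => h. Qed.

Lemma coneC0 : coneC A B 0.
Proof.
rewrite -triple0; apply/coneCE; split; rewrite ?mulmx0 ?subrr // => i.
by rewrite mxE.
Qed.

Lemma coneCD u v : coneC A B u -> coneC A B v -> coneC A B (u + v).
Proof.
rewrite (triple_eta u) (triple_eta v) tripleD !coneCE => -[a1 b1 c1] [a2 b2 c2].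
split; first by rewrite mulmxDr a1 a2 addr0.
  by rewrite mulmxDr b1 b2 opprD addrACA.
move=> i; rewrite !cvD; have [? ?] := c1 i; have [? ?] := c2 i; split; exact: addr_ge0.
Qed.

Lemma coneCZ a u : 0 <= a -> coneC A B u -> coneC A B (a *: u).
Proof.
move=> ha; rewrite (triple_eta u) tripleZ !coneCE => -[a1 b1 c1].
split; first by rewrite -scalemxAr a1 scaler0.
  by rewrite -scalemxAr b1 scalerBr.
move=> i; rewrite !cvZ; have [? ?] := c1 i; split; exact: mulr_ge0.
Qed.

Lemma coneC_sum m (c : 'I_m -> R) (p : 'I_m -> 'cV[R]_(n + (mB + mB))) :
  (forall j, 0 <= c j /\ coneC A B (p j)) -> coneC A B (\sum_j c j *: p j).
Proof.
move=> h; apply: (big_ind (coneC A B)); [exact: coneC0|exact: coneCD|].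
by move=> j _; have [? ?] := h j; apply: coneCZ.
Qed.

Definition posv (u : 'cV[R]_mB) : 'cV[R]_mB := \col_i Num.max (u i 0) 0.
Definition negv (u : 'cV[R]_mB) : 'cV[R]_mB := \col_i Num.max (- u i 0) 0.
Definition Dv (x : 'cV[R]_n) := triple x (posv (B *m x)) (negv (B *m x)).

Lemma posvE u i : posv u i 0 = Num.max (u i 0) 0. Proof. by rewrite mxE. Qed.
Lemma negvE u i : negv u i 0 = Num.max (- u i 0) 0. Proof. by rewrite mxE. Qed.

Lemma Dv_cone x : A *m x = 0 -> coneC A B (Dv x).
Proof.
move=> ax; apply/coneCE; split => //.
  by apply/matrixP => i j; rewrite ord1 cvB posvE negvE maxpn.
by move=> i; rewrite posvE negvE !max_ge0.
Qed.

Lemma Dv0 : Dv 0 = 0.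
Proof.
rewrite /Dv mulmx0 -triple0; congr triple; apply/matrixP => i j;
  by rewrite ord1 ?posvE ?negvE mxE ?oppr0 !maxE0 lexx.
Qed.

Lemma DvZ a x : 0 <= a -> Dv (a *: x) = a *: Dv x.
Proof.
move=> ha; rewrite /Dv tripleZ -scalemxAr; congr triple; apply/matrixP => i j;
  by rewrite ord1 ?posvE ?negvE !cvZ ?posvE ?negvE -?mulrN maxZ.
Qed.

Lemma DvD x1 x2 : conf (B *m x1) (B *m (x1 + x2)) -> conf (B *m x2) (B *m (x1 + x2)) ->
  Dv (x1 + x2) = Dv x1 + Dv x2.
Proof.
move=> h1 h2; rewrite /Dv tripleD; congr triple; apply/matrixP => i j;
  rewrite ord1 cvD ?posvE ?negvE; have [a1 b1] := h1 i; have [a2 b2] := h2 i.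
  apply: maxD => //; by rewrite mulmxDr cvD.
apply: maxD; rewrite ?mulrNN // -?opprD; try (by rewrite mulmxDr cvD).
- by move=> /eqP; rewrite oppr_eq0 => /eqP /b1 ->; rewrite oppr0.
- by move=> /eqP; rewrite oppr_eq0 => /eqP /b2 ->; rewrite oppr0.
Qed.
Arguments Dv_cone [x].
Arguments elem_conf [k x].
Arguments elem_prop [y x].
Arguments DvD [x1 x2].
Lemma decomp (G : 'cV[R]_(n + (mB + mB)) -> Prop) :
  (forall y, elem y -> Cone G (Dv y)) ->
  forall k x, (#|supp (B *m x)| <= k)%N -> A *m x = 0 -> Cone G (Dv x).
Proof.
move=> hG; elim=> [|k IH] x hc ax; (have [->|x0] := eqVneq x 0; first by rewrite Dv0; exact: Cone0).
  have [i hi] := cv_neq0 (Bx_neq0 x0 ax).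
  have : (0 < #|supp (B *m x)|)%N by apply/card_gt0P; exists i; rewrite suppE.
  by rewrite ltnNge hc.
have [y [ey cy]] := elem_conf (leqnn _) x0 ax.
have [y0 ay _] := ey.
set w := B *m x in cy hc *; set u := B *m y in cy.
have [i0 hi0] := cv_neq0 (Bx_neq0 y0 ay); rewrite -/u in hi0.
have [c1 c2] := cy i0.
have wi0 : w i0 0 != 0 by apply: contra hi0 => /eqP /c2 ->.
have pr : 0 < w i0 0 / u i0 0.
  have -> : w i0 0 / u i0 0 = (u i0 0 * w i0 0) / (u i0 0 ^+ 2) by field.
  apply: divr_gt0; last by rewrite exprn_even_gt0.
  by rewrite lt_neqAle c1 andbT eq_sym mulf_neq0.
have [j [pj mj]] := ratio_min pr.
have hs : forall i, w i 0 = 0 -> u i 0 = 0 by move=> i /(proj2 (cy i)).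
have [hcf hj] := shrink hs pj mj.
set t := w j 0 / u j 0 in hcf hj pj.
set x' := x - t *: y.
have bx' : B *m x' = w - t *: u by rewrite /x' mulmxBr -scalemxAr.
have wj : w j 0 != 0 by apply: contraTneq pj => wj0; rewrite /t wj0 mul0r ltxx.
have hp' : supp (B *m x') \proper supp w.
  apply/properP; split; first by rewrite bx'; exact: conf_supp.
  by exists j; rewrite !suppE // bx' hj eqxx.
have ax' : A *m x' = 0 by rewrite /x' mulmxBr -scalemxAr ax ay scaler0 subrr.
have cx' := IH x' (leq_trans (proper_card hp') hc) ax'.
have ex : x = x' + t *: y by rewrite /x' subrK.
have ctu : conf (B *m (t *: y)) (B *m (x' + t *: y)).
  rewrite -ex -scalemxAr => i; rewrite cvZ -/w -/u; have [d1 d2] := cy i; split.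
    by rewrite -mulrA; apply: mulr_ge0 => //; apply: ltW.
  by move=> /d2 ->; rewrite mulr0.
have cx'' : conf (B *m x') (B *m (x' + t *: y)) by rewrite -ex bx'.
rewrite ex (DvD cx'' ctu) DvZ; last exact: ltW.
apply: ConeD => //; apply: ConeZ; [exact: ltW | exact: hG].
Qed.

Lemma split_conf (p p' q q' s b : R) : 0 <= p -> 0 <= p' -> 0 <= q -> 0 <= q' ->
  Num.max s 0 = p + p' -> Num.max (- s) 0 = q + q' -> b = p - q ->
  [/\ Num.max b 0 = p, Num.max (- b) 0 = q, 0 <= b * s & (s = 0 -> b = 0)].
Proof.
move=> h1 h2 h3 h4 e1 e2 eb; move: e1 e2; rewrite !maxE0 !oppr_ge0.
case: (lerP 0 s) => hs; case: (lerP s 0) => hs' e1 e2.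
- have s0 : s = 0 by apply/le_anti; rewrite hs hs'.
  have pz : p = 0 by lra.
  have qz : q = 0 by lra.
  rewrite eb pz qz subrr mul0r oppr0 lexx; split => //.
- have qz : q = 0 by lra.
  have bp : b = p by lra.
  rewrite bp qz; split => //; last by move=> s0; move: hs'; rewrite s0 ltxx.
    by case: (lerP 0 p) => hp //; lra.
    by case: (lerP p 0) => hp //; lra.
  exact: mulr_ge0.
- have pz : p = 0 by lra.
  have bq : b = - q by lra.
  rewrite bq pz ?opprK; split => //; last by move=> s0; move: hs; rewrite s0 ltxx.
    by case: (lerP 0 (- q)) => hp //; lra.
    by case: (lerP (- q) 0) => hp //; lra.
  by apply: mulr_le0; lra.
- lra.
Qed.

Lemma elem_extreme y : elem y -> extreme_ray (coneC A B) (Dv y).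
Proof.
move=> ey; have [y0 ay hy] := ey; split; [|exact: Dv_cone ay|].
  by apply: contra y0 => /eqP; rewrite -triple0 => /triple_inj [-> _ _].
move=> u v; rewrite (triple_eta u) (triple_eta v).
move: (xpart u) (yppart u) (ympart u) (xpart v) (yppart v) (ympart v) => x p q x' p' q'.
move=> /coneCE [ax bx pq] /coneCE [ax' bx' pq'].
rewrite /Dv tripleD => /triple_inj [ey1 ep eq].
have key : forall i, [/\ Num.max ((B *m x) i 0) 0 = p i 0, Num.max (- (B *m x) i 0) 0 = q i 0,
   0 <= (B *m x) i 0 * (B *m y) i 0 & ((B *m y) i 0 = 0 -> (B *m x) i 0 = 0)].
  move=> i; have [? ?] := pq i; have [? ?] := pq' i.
  have e1 : Num.max ((B *m y) i 0) 0 = p i 0 + p' i 0 by rewrite -posvE ep cvD.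
  have e2 : Num.max (- (B *m y) i 0) 0 = q i 0 + q' i 0 by rewrite -negvE eq cvD.
  have e3 : (B *m x) i 0 = p i 0 - q i 0 by rewrite bx cvB.
  exact: (@split_conf (p i 0) (p' i 0) (q i 0) (q' i 0) ((B *m y) i 0) ((B *m x) i 0)).
have cf : conf (B *m x) (B *m y) by move=> i; have [_ _ ? ?] := key i.
have [l el] := elem_prop ey ax (conf_supp cf).
have [i0 hi0] := cv_neq0 (Bx_neq0 y0 ay).
have l0 : 0 <= l.
  have [_ _ k _] := key i0; move: k; rewrite el -scalemxAr cvZ -mulrA.
  have : 0 < (B *m y) i0 0 * (B *m y) i0 0 by rewrite -expr2 exprn_even_gt0.
  by move=> hp k; rewrite -(pmulr_lge0 _ hp).
exists l; split => //.
have -> : triple x p q = Dv x.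
  rewrite /Dv; congr triple; apply/matrixP => i j; rewrite ord1 ?posvE ?negvE;
  by have [? ? _ _] := key i.
by rewrite el DvZ.
Qed.
Definition ecv (i : 'I_mB) : 'cV[R]_mB := \col_j (j == i)%:R.

Lemma ecvE i j : ecv i j 0 = (j == i)%:R. Proof. by rewrite mxE. Qed.

Lemma TelemE i : Telem R n i = triple 0 (ecv i) (ecv i). Proof. by []. Qed.

Lemma Telem_cone i : coneC A B (Telem R n i).
Proof.
rewrite TelemE; apply/coneCE; split; rewrite ?mulmx0 ?subrr //.
by move=> j; rewrite ecvE ler0n.
Qed.

Lemma Telem_extreme i : (~ exists x, A *m x = 0 /\ supp (B *m x) = [set i]) ->
  extreme_ray (coneC A B) (Telem R n i).
Proof.
move=> hI; split; [|exact: Telem_cone|].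
  rewrite TelemE -triple0; apply/negP => /eqP /triple_inj [_ h _].
  by move: (congr1 (fun M : 'cV[R]_mB => M i 0) h); rewrite ecvE eqxx mxE => /eqP; rewrite oner_eq0.
move=> u v; rewrite TelemE (triple_eta u) (triple_eta v).
move: (xpart u) (yppart u) (ympart u) (xpart v) (yppart v) (ympart v) => x p q x' p' q'.
move=> /coneCE [ax bx pq] /coneCE [ax' bx' pq'].
rewrite tripleD => /triple_inj [ex ep eq].
have off : forall j, j != i -> p j 0 = 0 /\ q j 0 = 0.
  move=> j ji; have [? ?] := pq j; have [? ?] := pq' j.
  have := congr1 (fun M : 'cV[R]_mB => M j 0) ep; have := congr1 (fun M : 'cV[R]_mB => M j 0) eq.
  rewrite /= !cvD ecvE (negbTE ji) /= => e1 e2; split; lra.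
have bxi : (B *m x) i 0 = 0.
  apply: NNPP => hne; apply: hI; exists x; split => //; apply/setP => j.
  rewrite suppE inE; have [->|ji] := eqVneq j i; first by apply/eqP.
  by rewrite bx cvB; have [-> ->] := off j ji; rewrite subrr eqxx.
have bx0 : B *m x = 0.
  apply/matrixP => j k; rewrite ord1 [RHS]mxE; have [->|ji] := eqVneq j i => //.
  by rewrite bx cvB; have [-> ->] := off j ji; rewrite subrr.
have x0 : x = 0 by apply: hk.
have epq : p = q by apply/eqP; rewrite -subr_eq0 -bx bx0.
exists (p i 0); split; first by have [] := pq i.
rewrite x0 -epq tripleZ scaler0; congr triple; apply/matrixP => j k;
  rewrite ord1 cvZ ecvE; (have [->|ji] := eqVneq j i; first by rewrite mulr1);
  by rewrite mulr0; have [] := off j ji.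
Qed.

Lemma Telem_split i x : A *m x = 0 -> supp (B *m x) = [set i] ->
  exists x', A *m x' = 0 /\ Telem R n i = Dv x' + Dv (- x').
Proof.
move=> ax sx.
have bi : (B *m x) i 0 != 0 by rewrite -suppE sx inE.
exists (((B *m x) i 0)^-1 *: x); split; first by rewrite -scalemxAr ax scaler0.
have e : B *m (((B *m x) i 0)^-1 *: x) = ecv i.
  apply/matrixP => j k; rewrite ord1 -scalemxAr cvZ ecvE.
  have [->|ji] := eqVneq j i; first by rewrite mulVf.
  have : j \notin supp (B *m x) by rewrite sx inE.
  by rewrite suppE negbK => /eqP ->; rewrite mulr0.
rewrite /Dv tripleD mulmxN e subrr TelemE; congr triple; apply/matrixP => j k;
  rewrite ord1 cvD ?posvE ?negvE cvN ecvE !maxE0 !oppr_ge0 ?opprK;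
  case: (j == i); rewrite /= ?oppr0 ?lexx ?ler01 ?ler10 ?addr0 ?add0r //;
  rewrite ?oppr_ge0 ?ler10 ?lerN10 //.
Qed.
Lemma sum_ecv (s : 'cV[R]_mB) : \sum_i s i 0 *: ecv i = s.
Proof.
apply/matrixP => k l; rewrite ord1 summxE (bigD1 k) //= big1 => [|i ik].
  by rewrite cvZ ecvE eqxx mulr1 addr0.
by rewrite cvZ ecvE eq_sym (negbTE ik) mulr0.
Qed.

Lemma gen_fwd (G : 'cV[R]_(n + (mB + mB)) -> Prop) (I : {set 'I_mB}) :
  (forall y, elem y -> Cone G (Dv y)) ->
  (forall i, i \in I -> G (Telem R n i)) ->
  (forall i, i \notin I -> exists x, A *m x = 0 /\ supp (B *m x) = [set i]) ->
  forall z, coneC A B z -> Cone G z.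
Proof.
move=> hG hI hnI z; rewrite (triple_eta z).
move: (xpart z) (yppart z) (ympart z) => x p q /coneCE [ax bx pq].
have hD : forall x0, A *m x0 = 0 -> Cone G (Dv x0).
  by move=> x0 ax0; exact: (@decomp G hG _ _ (leqnn _) ax0).
set s := p - posv (B *m x).
have hm : forall w w' : 'cV[R]_mB, triple (0 : 'cV[R]_n) (w + w') (w + w') =
    triple (0 : 'cV[R]_n) w w + triple (0 : 'cV[R]_n) w' w'.
  by move=> w w'; rewrite tripleD addr0.
have -> : triple x p q = Dv x + \sum_i s i 0 *: Telem R n i.
  rewrite (eq_bigr (fun i => triple (0 : 'cV[R]_n) (s i 0 *: ecv i) (s i 0 *: ecv i))); last first.
    by move=> i _; rewrite TelemE tripleZ scaler0.
  rewrite -(big_morph (fun w : 'cV[R]_mB => triple (0 : 'cV[R]_n) w w) hm triple0) sum_ecv.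
  rewrite /Dv tripleD addr0; congr triple; apply/matrixP => k l;
  rewrite ord1 cvD /s cvB ?posvE ?negvE; have := @maxpn _ ((B *m x) k 0);
  rewrite bx cvB; lra.
apply: ConeD; first exact: hD.
apply: Cone_sum => i; apply: ConeZ.
  rewrite /s cvB posvE subr_ge0 maxE0; have [? ?] := pq i; move: bx => /matrixP /(_ i 0).
  by rewrite cvB => ->; case: (lerP 0 _) => _ //; lra.
case: (boolP (i \in I)) => hi; first by apply: ConeG; exact: hI.
have [x1 [ax1 sx1]] := hnI i hi.
have [x' [ax' ->]] := @Telem_split i x1 ax1 sx1.
by apply: ConeD; apply: hD => //; rewrite mulmxN ax' oppr0.
Qed.

Lemma ext_mult (G : 'cV[R]_(n + (mB + mB)) -> Prop) :
  (forall z, G z -> coneC A B z) -> (forall z, coneC A B z -> Cone G z) ->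
  forall r, extreme_ray (coneC A B) r -> exists z, G z /\ exists2 a : R, 0 < a & r = a *: z.
Proof.
move=> hGC hgen r [r0 cr hr].
have [k [c [p [h er]]]] := hgen r cr.
have [j hj] : exists j, c j *: p j != 0.
  apply: NNPP => hn; move/eqP: r0; apply; rewrite er big1 // => j _.
  by apply/eqP; apply: negbNE; apply/negP => hj; apply: hn; exists j.
have [cj gj] := h j.
have hu : coneC A B (c j *: p j) by apply: coneCZ => //; exact: hGC.
have hv : coneC A B (\sum_(i | i != j) c i *: p i).
  apply: (big_ind (coneC A B)); [exact: coneC0|exact: coneCD|].
  by move=> i _; have [? ?] := h i; apply: coneCZ => //; exact: hGC.
move: er; rewrite (bigD1 j) //= => er.
have [a [a0 ea]] := hr _ _ hu hv er.
have an : a != 0 by apply: contraNneq hj => a00; rewrite ea a00 scale0r.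
have cn : c j != 0 by apply: contraNneq hj => c00; rewrite c00 scale0r.
exists (p j); split => //; exists (a^-1 * c j).
  by apply: mulr_gt0; rewrite ?invr_gt0 lt_neqAle eq_sym ?an ?cn ?a0 ?cj.
by rewrite -scalerA ea scalerA mulVf // scale1r.
Qed.
Lemma elem_circuit (A0 : 'M[rat]_(mA, n)) (B0 : 'M[rat]_(mB, n)) :
  A = ratmx R A0 -> B = ratmx R B0 -> forall y, elem y ->
  exists g, circuit A B g /\ exists2 l : R, 0 < l & y = l *: intcv R g.
Proof.
move=> hA hB y ey; have [y0 ay hy] := ey.
set S := supp (B *m y).
set M0 : 'M[rat]_(mA + mB, n) := col_mx A0 (\matrix_(i, j) if i \in S then 0 else B0 i j).
have hM : map_mx (@ratr R) M0 = col_mx A (\matrix_(i, j) if i \in S then 0 else B i j).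
  rewrite map_col_mx hA; congr col_mx; apply/matrixP => i j; rewrite !mxE hB /ratmx mxE.
  by case: (i \in S); rewrite ?rmorph0.
have hMB : forall x, (\matrix_(i, j) (if i \in S then 0 else B i j)) *m x =
    \col_i (if i \in S then 0 else (B *m x) i 0).
  move=> x; apply/matrixP => i j; rewrite ord1 !mxE.
  under eq_bigr => l _ do rewrite mxE.
  case: (i \in S) => //=.
  by rewrite big1 // => l _; rewrite mul0r.
have My : map_mx (@ratr R) M0 *m y = 0.
  rewrite hM mul_col_mx ay hMB; apply/eqP; rewrite col_mx_eq0 eqxx /=; apply/eqP/matrixP => i j.
  rewrite ord1 mxE [RHS]mxE; case: ifP => // /negbT.
  by rewrite /S suppE negbK => /eqP.
have rk : (\rank M0 < n)%N.
  rewrite ltn_neqAle rank_leq_col andbT; apply/eqP => hr; move/eqP: y0; apply.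
  by apply: (@rank_inj _ _ _ (map_mx (@ratr R) M0) y _ My); rewrite mxrank_map.
have [q [q0 Mq]] := @ker_nz _ _ _ M0 rk.
set yq := map_mx (@ratr R) q.
have yq0 : yq != 0 by rewrite map_mx_eq0.
have Myq : map_mx (@ratr R) M0 *m yq = 0 by rewrite -map_mxM Mq map_mx0.
move: Myq; rewrite hM mul_col_mx hMB => /eqP; rewrite col_mx_eq0 => /andP [/eqP ayq /eqP mb].
have syq : supp (B *m yq) \subset S.
  apply/subsetP => i; rewrite suppE; apply: contraR => hi.
  move/matrixP: mb => /(_ i 0); rewrite mxE [RHS]mxE (negbTE hi) => ->.
  by rewrite eqxx.
have [l el] := elem_prop ey ayq syq.
have l0 : l != 0 by apply: contra yq0 => /eqP l00; rewrite el l00 scale0r.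
have [g [c [c0 qc gg]]] := @int_scale _ q q0.
have eyq : yq = ratr c *: intcv R g.
  apply/matrixP => i j; rewrite ord1 !mxE qc rmorphM rmorph_int //.
set kk := l^-1 * ratr c.
have ey' : y = kk *: intcv R g by rewrite /kk -scalerA -eyq el scalerA mulVf // scale1r.
have k0 : kk != 0 by rewrite mulf_neq0 ?invr_eq0 // fmorph_eq0.
have [g' [kp [kp0 ey'' gg']]] : exists g' : 'cV[int]_n, exists kp : R,
    [/\ 0 < kp, y = kp *: intcv R g' & (\big[gcdn/0]_(i < n) `|g' i ord0|)%N = 1%N].
  have [kpos|kneg] := ltP 0 kk; first by exists g, kk.
  exists (- g), (- kk); split.
  - by rewrite oppr_gt0 lt_neqAle k0 kneg.
  - by rewrite ey'; apply/matrixP => i j; rewrite !mxE mulrNz mulrNN.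
  - by rewrite -[RHS]gg; apply: eq_bigr => i _; rewrite mxE abszN.
exists g'; split; last by exists kp.
have kp0' : kp != 0 by rewrite gt_eqF.
have eg : intcv R g' = kp^-1 *: y by rewrite ey'' scalerA mulVf // scale1r.
split => //.
- apply: contra y0 => /eqP g00; rewrite ey'' g00; apply/eqP/matrixP => i j.
  by rewrite !mxE mulr0.
- by rewrite eg -scalemxAr ay scaler0.
- by rewrite eg -scalemxAr supp_scale ?invr_eq0.
Qed.
Lemma coneC_pointed : pointed_cone (coneC A B).
Proof.
move=> z; rewrite (triple_eta z); move: (xpart z) (yppart z) (ympart z) => x p q.
rewrite -scaleN1r tripleZ !coneCE => -[ax bx pq] [_ _ pq'].
have hp : p = 0.
  apply/matrixP => i j; rewrite ord1 [RHS]mxE; have [? _] := pq i; have [h _] := pq' i.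
  by move: h; rewrite cvZ mulN1r oppr_ge0 => h'; apply/le_anti; rewrite h'.
have hq : q = 0.
  apply/matrixP => i j; rewrite ord1 [RHS]mxE; have [_ ?] := pq i; have [_ h] := pq' i.
  by move: h; rewrite cvZ mulN1r oppr_ge0 => h'; apply/le_anti; rewrite h'.
have hx : x = 0 by apply: hk => //; rewrite bx hp hq subrr.
by rewrite hx hp hq triple0.
Qed.

Lemma circuit_elem g : circuit A B g -> elem (intcv R g).
Proof.
case=> g0 ag _ hm; split => //.
have [i [j hij]] := matrix0Pn _ g0.
by apply/matrix0Pn; exists i, j; rewrite mxE intr_eq0.
Qed.

Lemma main_gen (A0 : 'M[rat]_(mA, n)) (B0 : 'M[rat]_(mB, n)) :
  A = ratmx R A0 -> B = ratmx R B0 ->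
  pointed_cone (coneC A B) /\
  exists I : {set 'I_mB},
    let G := fun z => Sset A B z \/ exists2 i, i \in I & z = Telem R n i in
    [/\ (#|I| <= mB)%N,
        generates G (coneC A B),
        (forall z, G z -> extreme_ray (coneC A B) z) &
        (forall r, extreme_ray (coneC A B) r ->
           exists z, G z /\ exists2 a : R, 0 < a & r = a *: z)].
Proof.
move=> hA hB; split; first exact: coneC_pointed.
exists [set i | `[< ~ exists x, A *m x = 0 /\ supp (B *m x) = [set i] >]].
set I := [set i | _].
move=> G.
have hGC : forall z, G z -> coneC A B z.
  move=> z [[g [cg ->]]|[i _ ->]]; last exact: Telem_cone.
  by have [_ ag _ _] := cg; exact: (Dv_cone ag).
have hG : forall y, elem y -> Cone G (Dv y).
  move=> y ey; have [g [cg [l l0 ->]]] := @elem_circuit A0 B0 hA hB y ey.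
  rewrite DvZ; last exact: ltW.
  by apply: ConeZ; [exact: ltW | apply: ConeG; left; exists g].
have hI : forall i, i \in I -> G (Telem R n i) by move=> i hi; right; exists i.
have hnI : forall i, i \notin I -> exists x, A *m x = 0 /\ supp (B *m x) = [set i].
  by move=> i; rewrite inE => /asboolPn; apply: NNPP.
have hfwd := @gen_fwd G I hG hI hnI.
split.
- by rewrite -[X in (_ <= X)%N]card_ord max_card.
- move=> z; split; first exact: hfwd.
  move=> [k [c [p [h ->]]]]; apply: coneC_sum => j.
  by have [? ?] := h j; split => //; exact: hGC.
- move=> z [[g [cg ->]]|[i hi ->]].
    exact: (@elem_extreme _ (@circuit_elem g cg)).
  by apply: (@Telem_extreme i); move: hi; rewrite inE => /asboolP.
- exact: (@ext_mult G hGC hfwd).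
Qed.
End Gen.

Theorem theorem3 (R : realType) (mA mB n : nat)
    (A0 : 'M[rat]_(mA, n)) (B0 : 'M[rat]_(mB, n))
    (b : 'cV[R]_mA) (d : 'cV[R]_mB) :
  let A := ratmx R A0 in
  let B := ratmx R B0 in
  pointed_poly A B ->
  pointed_cone (coneC A B) /\
  exists I : {set 'I_mB},
    let G := fun z => Sset A B z \/ exists2 i, i \in I & z = Telem R n i in
    [/\ (#|I| <= mB)%N,
        generates G (coneC A B),
        (forall z, G z -> extreme_ray (coneC A B) z) &
        (forall r, extreme_ray (coneC A B) r ->
           exists z, G z /\ exists2 a : R, 0 < a & r = a *: z)].
Proof.
move=> A B hp.
have hk : forall x : 'cV[R]_n, A *m x = 0 -> B *m x = 0 -> x = 0.
  move=> x ax bx; apply: (@rank_inj _ _ _ (col_mx A B) x hp).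
  by rewrite mul_col_mx ax bx col_mx0.
exact: (@main_gen R mA mB n A B hk A0 B0 erefl erefl).
Qed.
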